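(* Let $F$ be the unique series in $\mathbb{Q}[x,\bar x,y,\bar y][[t]]$ satisfying $(1-St)F=\bar x\bar y-\bar x t[x^0][y^\ge]F-\bar y t[y^0][x^\ge]F$, and set $F_1=[x^<]F+[x^\ge][y^<]F$ and $F_2=[x^\ge][y^\ge]F$ (so $F=F_1+F_2$). Define $$H(x,y,t)=(\bar x-x)\,[\bar x]\Bigl(\bar y\,[y^\le]F_1(x,\bar y,t)-y\,[y^\ge]F_1(x,y,t)\Bigr).$$ Then $$F_2(x,y,t)=\bar x\bar y t\,[x^>][y^>]\frac{H(x,y,t)+H(y,x,t)}{1-St}.$$
   Context: Notation: $\bar x=x^{-1}$, $\bar y=y^{-1}$, $S=x+y+\bar x+\bar y$; series in $\mathbb{Q}[x,\bar x,y,\bar y][[t]]$, with $1/(1-St)$ expanded as a power series in $t$. For $G=\sum c_{i,j,n}x^iy^jt^n$: $[x^0]G=\sum_{j,n}c_{0,j,n}y^jt^n$, $[y^0]G=\sum_{i,n}c_{i,0,n}x^it^n$; $[x^<],[x^\le],[x^\ge],[x^>]$ denote the sums of terms with $x$-exponent $<0$, $\le0$, $\ge0$, $>0$ respectively, analogously for $y$; $[\bar x]G=\sum_{j,n}c_{-1,j,n}y^jt^n$ is the coefficient of $x^{-1}$. *)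

(* Defs.v *)
(* Formal power series in t with Laurent-polynomial
   coefficients in x, y over Q, represented by coefficient functions
   G i j n = [x^i y^j t^n] G. *)
From HB Require Import structures.
From mathcomp Require Import all_boot all_order all_algebra.
Set Implicit Arguments. Unset Strict Implicit. Unset Printing Implicit Defensive.
Import Order.TTheory GRing.Theory Num.Theory.
Local Open Scope ring_scope.

Definition series := int -> int -> nat -> rat.

Definition laurent_series (G : series) : Prop :=
  forall n : nat, exists N : nat, forall (i j : int),
    ((N < `|i|)%N || (N < `|j|)%N) -> G i j n = 0.

Definition sadd (G K : series) : series := fun i j n => G i j n + K i j n.
Definition ssub (G K : series) : series := fun i j n => G i j n - K i j n.

Definition mul_x (G : series) : series := fun i j n => G (i - 1) j n.
Definition mul_xb (G : series) : series := fun i j n => G (i + 1) j n.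
Definition mul_y (G : series) : series := fun i j n => G i (j - 1) n.
Definition mul_yb (G : series) : series := fun i j n => G i (j + 1) n.
Definition mul_t (G : series) : series :=
  fun i j n => match n with 0%N => 0 | n'.+1 => G i j n' end.

Definition mul_S (G : series) : series :=
  sadd (sadd (mul_x G) (mul_y G)) (sadd (mul_xb G) (mul_yb G)).

(* G / (1 - S t) = sum_k S^k t^k G *)
Definition div_1_St (G : series) : series :=
  fun i j n => \sum_(k < n.+1) iter k mul_S G i j (n - k)%N.

Definition xbyb : series :=
  fun i j n => if (i == -1) && (j == -1) && (n == 0%N) then 1 else 0.

Definition cx0 (G : series) : series := fun i j n => if i == 0 then G i j n else 0.
Definition cy0 (G : series) : series := fun i j n => if j == 0 then G i j n else 0.
Definition cxlt (G : series) : series := fun i j n => if i < 0 then G i j n else 0.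
Definition cxle (G : series) : series := fun i j n => if i <= 0 then G i j n else 0.
Definition cxge (G : series) : series := fun i j n => if 0 <= i then G i j n else 0.
Definition cxgt (G : series) : series := fun i j n => if 0 < i then G i j n else 0.
Definition cylt (G : series) : series := fun i j n => if j < 0 then G i j n else 0.
Definition cyle (G : series) : series := fun i j n => if j <= 0 then G i j n else 0.
Definition cyge (G : series) : series := fun i j n => if 0 <= j then G i j n else 0.
Definition cygt (G : series) : series := fun i j n => if 0 < j then G i j n else 0.
(* [xbar] G : coefficient of x^{-1}, a series in y and t only *)
Definition cxbar (G : series) : series := fun i j n => if i == 0 then G (-1) j n else 0.

Definition subst_yb (G : series) : series := fun i j n => G i (- j) n.
Definition swap_xy (G : series) : series := fun i j n => G j i n.

Definition series_eq (G K : series) : Prop := forall i j n, G i j n = K i j n.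

Definition funeq (F : series) : Prop :=
  series_eq (ssub F (mul_t (mul_S F)))
            (ssub (ssub xbyb (mul_xb (mul_t (cx0 (cyge F)))))
                  (mul_yb (mul_t (cy0 (cxge F))))).

Definition F1 (F : series) : series := sadd (cxlt F) (cxge (cylt F)).
Definition F2 (F : series) : series := cxge (cyge F).

Definition Hser (F : series) : series :=
  let inner := ssub (mul_yb (cyle (subst_yb (F1 F)))) (mul_y (cyge (F1 F))) in
  let c := cxbar inner in
  ssub (mul_xb c) (mul_x c).

(* Main.v *)
Require Import Defs.
From mathcomp Require Import all_boot all_order all_algebra.
From mathcomp Require Import zify ring lra.
Import Order.TTheory GRing.Theory Num.Theory.
Local Open Scope ring_scope.

Definition antix (G : series) := forall i j n, G (-i) j n = - G i j n.
Definition antiy (G : series) := forall i j n, G i (-j) n = - G i j n.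

Lemma mulS_antix G : antix G -> antix (mul_S G).
Proof.
move=> h i j n; rewrite /mul_S /sadd /mul_x /mul_y /mul_xb /mul_yb.
have -> : -i - 1 = -(i+1) by ring.
have -> : -i + 1 = -(i-1) by ring.
rewrite !h; ring.
Qed.

Lemma mulS_antiy G : antiy G -> antiy (mul_S G).
Proof.
move=> h i j n; rewrite /mul_S /sadd /mul_x /mul_y /mul_xb /mul_yb.
have -> : -j - 1 = -(j+1) by ring.
have -> : -j + 1 = -(j-1) by ring.
rewrite !h; ring.
Qed.

Lemma div_antix G : antix G -> antix (div_1_St G).
Proof.
move=> h i j n; rewrite /div_1_St -sumrN; apply: eq_bigr => k _.
have hk : forall k : nat, antix (iter k mul_S G).
  elim=> [|k' IH] //=; exact: mulS_antix.
exact: hk.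
Qed.

Lemma div_antiy G : antiy G -> antiy (div_1_St G).
Proof.
move=> h i j n; rewrite /div_1_St -sumrN; apply: eq_bigr => k _.
have hk : forall k : nat, antiy (iter k mul_S G).
  elim=> [|k' IH] //=; exact: mulS_antiy.
exact: hk.
Qed.

Lemma mult_antix G : antix G -> antix (mul_t G).
Proof. by move=> h i j [|n] //=; rewrite oppr0. Qed.
Lemma mult_antiy G : antiy G -> antiy (mul_t G).
Proof. by move=> h i j [|n] //=; rewrite oppr0. Qed.

Lemma antix0 G : antix G -> forall j n, G 0 j n = 0.
Proof. move=> h j n; have := h 0 j n; rewrite oppr0; lra. Qed.
Lemma antiy0 G : antiy G -> forall i n, G i 0 n = 0.
Proof. move=> h i n; have := h i 0 n; rewrite oppr0; lra. Qed.

Arguments antix0 {G}.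
Arguments antiy0 {G}.

Lemma H_antix F : antix (Hser F).
Proof.
move=> i j n; rewrite /Hser /ssub /mul_xb /mul_x /cxbar.
have -> : -i + 1 = -(i-1) by ring.
have -> : -i - 1 = -(i+1) by ring.
rewrite !oppr_eq0; case: (i - 1 == 0); case: (i + 1 == 0); ring.
Qed.

Lemma H_antiy F : antiy (Hser F).
Proof.
move=> i j n; rewrite /Hser /ssub /mul_xb /mul_x /cxbar /mul_yb /mul_y /cyle /cyge /subst_yb.
have -> : (-j + 1 <= 0) = (0 <= j - 1) by lia.
have -> : (0 <= -j - 1) = (j + 1 <= 0) by lia.
have -> : -(-j + 1) = j - 1 by ring.
have -> : -j - 1 = -(j + 1) by ring.
case: (i + 1 == 0); case: (i - 1 == 0); case: (0 <= j - 1); case: (j + 1 <= 0); ring.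
Qed.

Lemma K_antix F : antix (sadd (Hser F) (swap_xy (Hser F))).
Proof.
move=> i j n; rewrite /sadd /swap_xy H_antix H_antiy; ring.
Qed.
Lemma K_antiy F : antiy (sadd (Hser F) (swap_xy (Hser F))).
Proof.
move=> i j n; rewrite /sadd /swap_xy H_antix H_antiy; ring.
Qed.

Lemma E_rec K a b n :
  mul_t (div_1_St K) a b n.+1 = K a b n + mul_S (mul_t (div_1_St K)) a b n.
Proof.
case: n => [|m].
  rewrite /= /mul_S /sadd /mul_x /mul_y /mul_xb /mul_yb /div_1_St /=.
  rewrite big_ord_recl big_ord0 /=; ring.
rewrite /= /mul_S /sadd /mul_x /mul_y /mul_xb /mul_yb /div_1_St.
rewrite big_ord_recl /= subn0; congr (_ + _).
rewrite -!big_split /=; apply: eq_bigr => k _.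
by rewrite subSS.
Qed.

Lemma F_rec F : funeq F -> forall a b n,
  F a b n.+1 = mul_S F a b n - cx0 (cyge F) (a + 1) b n - cy0 (cxge F) a (b + 1) n.
Proof.
move=> h a b n; have := h a b n.+1.
rewrite /ssub /xbyb /mul_xb /mul_yb /= andbF; lra.
Qed.

Lemma F_0 F : funeq F -> forall a b, F a b 0 = xbyb a b 0.
Proof.
move=> h a b; have := h a b 0%N.
rewrite /ssub /= /mul_xb /mul_yb /=; lra.
Qed.

Lemma F_sym F : funeq F -> forall n a b, F a b n = F b a n.
Proof.
move=> h; elim=> [|n IH] a b.
  rewrite !F_0 // /xbyb; by case: (a == -1); case: (b == -1).
rewrite !F_rec // /mul_S /sadd /mul_x /mul_y /mul_xb /mul_yb /cx0 /cy0 /cyge /cxge.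
rewrite (IH (b-1) a) (IH b (a-1)) (IH (b+1) a) (IH b (a+1)); ring.
Qed.

Lemma H_val F i j n : 0 <= i -> 0 <= j ->
  Hser F (i + 1) (j + 1) n = if i == 0 then F (-1) j n else 0.
Proof.
move=> hi hj.
rewrite /Hser /ssub /mul_xb /mul_x /cxbar /mul_yb /mul_y /cyle /cyge /subst_yb.
have -> : (i + 1 + 1 == 0) = false by lia.
have -> : (i + 1 - 1 == 0) = (i == 0) by lia.
have -> : (j + 1 + 1 <= 0) = false by lia.
have -> : (0 <= j + 1 - 1) = true by lia.
have -> : j + 1 - 1 = j by ring.
rewrite /F1 /sadd /cxlt /cxge /cylt /=.
case: (i == 0); ring.
Qed.

Theorem mainTheorem8 (F : series) :
  laurent_series F -> funeq F ->
  series_eq (F2 F)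
    (mul_xb (mul_yb (mul_t (cxgt (cygt (div_1_St (sadd (Hser F) (swap_xy (Hser F))))))))).
Proof.
move=> _ hF.
set K := sadd (Hser F) (swap_xy (Hser F)).
set E := mul_t (div_1_St K).
have Eax : antix E by apply/mult_antix/div_antix/K_antix.
have Eay : antiy E by apply/mult_antiy/div_antiy/K_antiy.
have main : forall n a b, 0 <= a -> 0 <= b -> F a b n = E (a + 1) (b + 1) n.
  elim=> [|n IH] a b ha hb.
    rewrite F_0 // /xbyb /E /=.
    by have -> : (a == -1) = false by lia.
  rewrite F_rec // /E E_rec -/E.
  have -> : cx0 (cyge F) (a + 1) b n = 0.
    by rewrite /cx0; have -> : (a + 1 == 0) = false by lia.
  have -> : cy0 (cxge F) a (b + 1) n = 0.
    by rewrite /cy0; have -> : (b + 1 == 0) = false by lia.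
  rewrite /K /sadd /swap_xy !H_val //.
  have e1 : F (a - 1) b n = E (a + 1 - 1) (b + 1) n + (if a == 0 then F (-1) b n else 0).
    case: eqP => [->|ha0].
      by rewrite !add0r subrr (antix0 Eax) ?sub0r ?add0r.
    rewrite IH; try lia.
    by rewrite subrK addrK addr0.
  have e2 : F a (b - 1) n = E (a + 1) (b + 1 - 1) n + (if b == 0 then F (-1) a n else 0).
    case: eqP => [->|hb0].
      by rewrite !add0r subrr (antiy0 Eay) ?sub0r ?add0r (@F_sym F hF n a (-1)).
    rewrite IH; try lia.
    by rewrite subrK addrK addr0.
  rewrite /mul_S /sadd /mul_x /mul_y /mul_xb /mul_yb e1 e2.
  rewrite (IH (a + 1) b) ?(IH a (b + 1)); try lia.
  case: (a == 0); case: (b == 0); ring.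
move=> a b n; rewrite /F2 /cxge /cyge /mul_xb /mul_yb.
have -> : mul_t (cxgt (cygt (div_1_St K))) (a + 1) (b + 1) n =
  if 0 < a + 1 then if 0 < b + 1 then E (a + 1) (b + 1) n else 0 else 0.
  by rewrite /E /cxgt /cygt; case: n => [|n] /=; case: (0 < a + 1); case: (0 < b + 1).
case ha: (0 <= a); case hb: (0 <= b).
- have -> : 0 < a + 1 by lia.
  have -> : 0 < b + 1 by lia.
  exact: main.
- have -> : 0 < b + 1 = false by lia.
  by case: (0 < a + 1).
- by have -> : 0 < a + 1 = false by lia.
- by have -> : 0 < a + 1 = false by lia.
Qed.
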